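(* Let $M$ be a regular, residually finite monoid. Then the (right) action of $M$ on its $\mathcal{L}$-classes and the left action of $M$ on its $\mathcal{R}$-classes are both residually finite. Equivalently, for any $s,t\in M$ with $(s,t)\notin\mathcal{L}$ there is a right congruence $\rho$ of finite index on $M$ with $\mathcal{L}\subseteq\rho$ and $(s,t)\notin\rho$, and dually for $\mathcal{R}$ with left congruences.
   Context: A monoid $M$ is regular if for every $x\in M$ there is $y\in M$ with $xyx=x$. It is residually finite if any two distinct elements are separated by a homomorphism to a finite monoid. Green's relations: $x\mathcal{R}y$ iff $xM=yM$, $x\mathcal{L}y$ iff $Mx=My$. $\mathcal{L}$ is a right congruence, so $M$ acts on the right on $M/\mathcal{L}$ by $L_x\cdot m=L_{xm}$; dually $M$ acts on the left on $M/\mathcal{R}$. A right action of $M$ on a set $X$ is residually finite if for any distinct $x,y\in X$ there is an action of $M$ on a finite set $Y$ and a map $f:X\to Y$ with $f(xm)=f(x)m$ for all $x,m$ and $f(x)\neq f(y)$ (dually for left actions). A right congruence has finite index if it has finitely many classes. *)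

(* Defs.v *)
From mathcomp Require Import all_boot.
Set Implicit Arguments. Unset Strict Implicit. Unset Printing Implicit Defensive.

Definition is_monoid (T : Type) (mul : T -> T -> T) (one : T) : Prop :=
  (forall x y z, mul x (mul y z) = mul (mul x y) z) /\
  (forall x, mul one x = x) /\ (forall x, mul x one = x).

Definition is_monoid_hom (A B : Type) (mulA : A -> A -> A) (oneA : A)
  (mulB : B -> B -> B) (oneB : B) (f : A -> B) : Prop :=
  (forall x y, f (mulA x y) = mulB (f x) (f y)) /\ f oneA = oneB.

Definition regular_monoid (M : Type) (mul : M -> M -> M) : Prop :=
  forall x, exists y, mul (mul x y) x = x.

Definition residually_finite_monoid (M : Type) (mul : M -> M -> M) (one : M) : Prop :=
  forall x y : M, x <> y ->
    exists (N : finType) (mulN : N -> N -> N) (oneN : N) (f : M -> N),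
      is_monoid mulN oneN /\ is_monoid_hom mul one mulN oneN f /\ f x <> f y.

Definition greenL (M : Type) (mul : M -> M -> M) (x y : M) : Prop :=
  exists a b, x = mul a y /\ y = mul b x.
Definition greenR (M : Type) (mul : M -> M -> M) (x y : M) : Prop :=
  exists a b, x = mul y a /\ y = mul x b.

Definition right_action (M : Type) (mul : M -> M -> M) (one : M)
  (X : Type) (act : X -> M -> X) : Prop :=
  (forall x, act x one = x) /\ (forall x a b, act (act x a) b = act x (mul a b)).
Definition left_action (M : Type) (mul : M -> M -> M) (one : M)
  (X : Type) (act : M -> X -> X) : Prop :=
  (forall x, act one x = x) /\ (forall a b x, act a (act b x) = act (mul a b) x).

(* Residual finiteness of the right action of M on the quotient set X/E,
   where the action on classes is [x]_E . m = [act x m]_E.  A map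
   f : X/E -> Y is represented by g : X -> Y constant on E-classes
   (g = f o [_]_E); equivariance of f is equivariance of g. *)
Definition rf_right_action_quot (M : Type) (mul : M -> M -> M) (one : M)
  (X : Type) (E : X -> X -> Prop) (act : X -> M -> X) : Prop :=
  forall x y : X, ~ E x y ->
    exists (Y : finType) (actY : Y -> M -> Y) (g : X -> Y),
      right_action mul one actY /\
      (forall u v, E u v -> g u = g v) /\
      (forall u m, g (act u m) = actY (g u) m) /\
      g x <> g y.

Definition rf_left_action_quot (M : Type) (mul : M -> M -> M) (one : M)
  (X : Type) (E : X -> X -> Prop) (act : M -> X -> X) : Prop :=
  forall x y : X, ~ E x y ->
    exists (Y : finType) (actY : M -> Y -> Y) (g : X -> Y),
      left_action mul one actY /\
      (forall u v, E u v -> g u = g v) /\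
      (forall u m, g (act m u) = actY m (g u)) /\
      g x <> g y.

(* Main.v *)
From Stdlib Require Import Classical ClassicalEpsilon.
Require Import Defs.
From mathcomp Require Import all_boot.

Definition gdec (P : Prop) : bool := if excluded_middle_informative P then true else false.

Lemma gdec_bool (P : Prop) (b : bool) : (P <-> b) -> gdec P = b.
Proof.
  rewrite /gdec; case: excluded_middle_informative => HP [H1 H2].
  - by case: b H1 H2 => // H1 _; have := H1 HP.
  - by case: b H1 H2 => // _ H2; exfalso; apply: HP; apply: H2.
Qed.

Lemma gdec_ext (P Q : Prop) : (P <-> Q) -> gdec P = gdec Q.
Proof.
  move=> [H1 H2]; rewrite /gdec; do 2 case: excluded_middle_informative => //.
  - by move=> nQ HP; exfalso; apply: nQ; apply: H1.
  - by move=> HQ nP; exfalso; apply: nP; apply: H2.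
Qed.

Lemma right_part (M : Type) (mul : M -> M -> M) (one : M) :
  is_monoid mul one ->
  regular_monoid mul ->
  residually_finite_monoid mul one ->
  rf_right_action_quot mul one (greenL mul) (fun x m => mul x m).
Proof.
  move=> [assoc [l1 r1]] reg rf.
  have H : forall s t, ~ (exists a, t = mul a s) ->
    exists (Y : finType) (actY : Y -> M -> Y) (g : M -> Y),
      right_action mul one actY /\
      (forall u v, greenL mul u v -> g u = g v) /\
      (forall u m, g (mul u m) = actY (g u) m) /\
      g s <> g t.
  { move=> s t nt.
    have [s' Hs] := reg s.
    have ne : mul t (mul s' s) <> t.
    { move=> E; apply: nt; exists (mul t s'); by rewrite -assoc E. }
    have [N [mulN [oneN [f [[Na [Nl Nr]] [[fm f1] fne]]]]]] := rf _ _ ne.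
    pose actY (A : {ffun N -> bool}) (m : M) : {ffun N -> bool} :=
      [ffun n => [exists b, A b && (mulN b (f m) == n)]].
    pose g (x : M) : {ffun N -> bool} :=
      [ffun n => gdec (exists a, f (mul a x) = n)].
    exists {ffun N -> bool}, actY, g.
    split; [split|split; [|split]].
    - move=> A; apply/ffunP => n; rewrite ffunE f1.
      apply/existsP/idP => [[b /andP [Ab /eqP <-]]|An]; first by rewrite Nr.
      by exists n; rewrite An Nr eqxx.
    - move=> A a b; apply/ffunP => n; rewrite !ffunE fm.
      apply/existsP/existsP => [[c /andP []]|
                               [d /andP [Ad /eqP <-]]].
      + rewrite ffunE => /existsP [d /andP [Ad /eqP <-]] /eqP <-.
        by exists d; rewrite Ad -Na eqxx.
      + exists (mulN d (f a)); rewrite Na eqxx andbT.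
        by rewrite ffunE; apply/existsP; exists d; rewrite Ad eqxx.
    - move=> u v [a [b [Eu Ev]]]; apply/ffunP => n; rewrite !ffunE.
      apply: gdec_ext; split.
      + by case=> c <-; exists (mul c a); rewrite Eu assoc.
      + by case=> c <-; exists (mul c b); rewrite Ev assoc.
    - move=> u m; apply/ffunP => n; rewrite !ffunE.
      apply: gdec_bool; split.
      + move=> [a <-]; apply/existsP; exists (f (mul a u)).
        rewrite ffunE -fm -assoc eqxx andbT.
        by apply/gdec_bool; split => // _; exists a.
      + move=> /existsP [b /andP [Hb /eqP <-]].
        move: Hb; rewrite ffunE /gdec; case: excluded_middle_informative => // -[a Ha] _.
        by exists a; rewrite assoc fm Ha.
    - move=> E; have : g t (f t) = true.
        by rewrite ffunE; apply/gdec_bool; split => // _; exists one; rewrite l1.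
      rewrite -E ffunE /gdec; case: excluded_middle_informative => // -[a Ha] _.
      apply: fne; rewrite fm -Ha -fm; congr f.
      by rewrite -!assoc (assoc s s' s) Hs. }
  move=> x y nL.
  case: (classic (exists a, y = mul a x)) => [[a Ha]|nx].
  - have ny : ~ (exists b, x = mul b y).
    { move=> [b Hb]; apply: nL; by exists b, a. }
    have [Y [actY [g [A [B [C D]]]]]] := H _ _ ny.
    exists Y, actY, g; do 3!(split => //); by move=> E; apply: D.
  - exact: H.
Qed.

Theorem mainTheorem2 (M : Type) (mul : M -> M -> M) (one : M) :
  is_monoid mul one ->
  regular_monoid mul ->
  residually_finite_monoid mul one ->
  rf_right_action_quot mul one (greenL mul) (fun x m => mul x m) /\
  rf_left_action_quot mul one (greenR mul) (fun m x => mul m x).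
Proof.
  move=> mon reg rf; split; first exact: right_part.
  have [assoc [l1 r1]] := mon.
  pose mul' := fun a b => mul b a.
  have mon' : is_monoid mul' one.
  { split; [move=> x y z; rewrite /mul'; by rewrite assoc | split => x; rewrite /mul' ?l1 ?r1 //]. }
  have reg' : regular_monoid mul'.
  { move=> x; have [y Hy] := reg x; exists y; by rewrite /mul' assoc. }
  have rf' : residually_finite_monoid mul' one.
  { move=> x y nxy; have [N [mulN [oneN [f [[Na [Nl Nr]] [[fm f1] fne]]]]]] := rf _ _ nxy.
    exists N, (fun a b => mulN b a), oneN, f; split; last split => //.
    - split; [move=> a b c; by rewrite Na | by split].
    - split => // a b; by rewrite /mul' fm. }
  have R := @right_part _ mul' one mon' reg' rf'.
  move=> x y nR.
  have [Y [actY [g [[A1 A2] [B [C D]]]]]] := R x y nR.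
  exists Y, (fun m y => actY y m), g; split; last by split.
  split => // a b z; by rewrite A2.
Qed.
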